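(* Let $\lambda \in P$. For every $\lhd \in \mathrm{RO}(\lambda, \Delta^{+})$ the total order $\prec_{\lhd}$ on $w(\lambda)\Delta^{+}$ belongs to $\mathrm{RO}(\lambda, w(\lambda)\Delta^{+})$, and the assignment $\lhd \mapsto \prec_{\lhd}$ is a bijection from $\mathrm{RO}(\lambda, \Delta^{+})$ onto $\mathrm{RO}(\lambda, w(\lambda)\Delta^{+})$.
   Context: Let $\mathfrak{g}$ be a finite-dimensional complex simple Lie algebra with root system $\Delta$, positive roots $\Delta^{+}$, Weyl group $W$ (with Bruhat order), weight lattice $P$, and pairing $\langle\cdot,\cdot\rangle$; $\alpha^\vee$ is the coroot of $\alpha$. For $\lambda \in P$ set $\Delta^{+}(\lambda)_{>0}$, $\Delta^{+}(\lambda)_{=0}$, $\Delta^{+}(\lambda)_{<0}$ to be the sets of $\alpha \in \Delta^{+}$ with $\langle \lambda, \alpha^{\vee}\rangle$ respectively $>0$, $=0$, $<0$. Let $\lambda_{+}$ be the dominant weight in $W\lambda$ and $w(\lambda)$ the Bruhat-maximal element of $\{w \in W \mid w\lambda_{+} = \lambda\}$; one has $w(\lambda)\Delta^{+} = \Delta^{+}(\lambda)_{>0} \sqcup (-\Delta^{+}(\lambda)_{<0}) \sqcup (-\Delta^{+}(\lambda)_{=0})$. For $w \in W$, a total order $\prec$ on $w\Delta^{+}$ is a reflection order if for all $\alpha,\beta \in w\Delta^{+}$ with $\alpha+\beta \in w\Delta^{+}$, either $\alpha \prec \alpha+\beta \prec \beta$ or $\beta \prec \alpha+\beta \prec \alpha$.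 Let $\mathrm{RO}(\lambda, \Delta^{+})$ be the set of reflection orders $\lhd$ on $\Delta^{+}$ such that $\alpha \lhd \beta \lhd \gamma$ for all $\alpha \in \Delta^{+}(\lambda)_{<0}$, $\beta \in \Delta^{+}(\lambda)_{=0}$, $\gamma \in \Delta^{+}(\lambda)_{>0}$. Let $\mathrm{RO}(\lambda, w(\lambda)\Delta^{+})$ be the set of reflection orders $\prec$ on $w(\lambda)\Delta^{+}$ such that $\gamma \prec -\alpha \prec -\beta$ for all $\gamma \in \Delta^{+}(\lambda)_{>0}$, $\alpha \in \Delta^{+}(\lambda)_{<0}$, $\beta \in \Delta^{+}(\lambda)_{=0}$. For $\lhd \in \mathrm{RO}(\lambda,\Delta^{+})$, the total order $\prec_{\lhd}$ on $w(\lambda)\Delta^{+}$ is defined as follows: every element of $\Delta^{+}(\lambda)_{>0}$ precedes every element of $-\Delta^{+}(\lambda)_{<0}$, which precedes every element of $-\Delta^{+}(\lambda)_{=0}$; on $\Delta^{+}(\lambda)_{>0}$, $\gamma \prec_{\lhd} \gamma'$ iff $\gamma \lhd \gamma'$; on $-\Delta^{+}(\lambda)_{<0}$ and on $-\Delta^{+}(\lambda)_{=0}$, $-\alpha \prec_{\lhd} -\alpha'$ iff $\alpha \lhd \alpha'$. *)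

(* Defs.v *)
(* Root systems of finite-dimensional complex simple Lie
   algebras are modelled as irreducible reduced crystallographic root systems
   in the Euclidean space 'rV[R]_n (standard dot product), R a real field. *)
From HB Require Import structures.
From mathcomp Require Import all_boot all_order all_algebra.
Set Implicit Arguments. Unset Strict Implicit. Unset Printing Implicit Defensive.
Import Order.TTheory GRing.Theory Num.Theory.
Local Open Scope ring_scope.

Section RootSystems.
Variables (R : realFieldType) (n : nat).
Notation V := 'rV[R]_n.

Definition dot (u v : V) : R := (u *m v^T) 0 0.

Definition pairing (v a : V) : R := 2 * dot v a / dot a a.

Definition is_integer (x : R) : Prop := exists z : int, x = z%:~R.

(* reflection s_a as a matrix acting on row vectors: v *m refl_mx a = s_a v *)
Definition refl_mx (a : V) : 'M[R]_n := 1%:M - (2 / dot a a) *: (a^T *m a).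

(* Irreducible reduced crystallographic root system spanning V *)
Definition simple_root_system (roots : seq V) : Prop :=
  [/\ uniq roots, roots != [::] & (0 : V) \notin roots] /\
  (forall v : V, (forall a, a \in roots -> dot v a = 0) -> v = 0) /\
  (forall a b, a \in roots -> b \in roots -> b *m refl_mx a \in roots) /\
  (forall a b, a \in roots -> b \in roots -> is_integer (pairing b a)) /\
  (forall a (c : R), a \in roots -> c *: a \in roots -> c = 1 \/ c = -1) /\
  (forall A : pred V,
        (forall a b, a \in roots -> b \in roots -> A a -> ~~ A b -> dot a b = 0) ->
        (forall a, a \in roots -> A a) \/ (forall a, a \in roots -> ~~ A a)).

Definition positive_system (roots pos : seq V) : Prop :=
  uniq pos /\ exists f : V, (forall a, a \in roots -> dot f a != 0) /\
    (forall a, (a \in pos) = (a \in roots) && (0 < dot f a)).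

Definition in_weight_lattice (roots : seq V) (l : V) : Prop :=
  forall a, a \in roots -> is_integer (pairing l a).

Definition in_weyl (roots : seq V) (w : 'M[R]_n) : Prop :=
  exists ts : seq V, all (mem roots) ts /\
    w = foldr (fun t M => refl_mx t *m M) 1%:M ts.

Definition weyl_length (roots pos : seq V) (w : 'M[R]_n) : nat :=
  count (fun a => a *m w \notin pos) pos.

Definition bruhat_step (roots pos : seq V) (u v : 'M[R]_n) : Prop :=
  exists2 b, b \in roots & v = u *m refl_mx b /\
    (weyl_length roots pos u < weyl_length roots pos v)%N.

Inductive bruhat_le (roots pos : seq V) : 'M[R]_n -> 'M[R]_n -> Prop :=
| bruhat_refl u : bruhat_le roots pos u u
| bruhat_trans u v w : bruhat_step roots pos u v -> bruhat_le roots pos v w ->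
    bruhat_le roots pos u w.

Definition posgt0 (pos : seq V) (l a : V) : bool := (a \in pos) && (0 < pairing l a).
Definition poseq0 (pos : seq V) (l a : V) : bool := (a \in pos) && (pairing l a == 0).
Definition poslt0 (pos : seq V) (l a : V) : bool := (a \in pos) && (pairing l a < 0).

(* A total order on a finite set S is encoded as a duplicate-free list s
   enumerating S; x precedes y iff x occurs before y. *)
Definition prec (s : seq V) (x y : V) : bool := (index x s < index y s)%N.

Definition total_order_on (S s : seq V) : Prop := uniq s /\ perm_eq s S.

Definition reflection_order (S s : seq V) : Prop :=
  total_order_on S s /\
  forall a b, a \in S -> b \in S -> a + b \in S ->
    (prec s a (a + b) && prec s (a + b) b) || (prec s b (a + b) && prec s (a + b) a).

Definition RO_pos (pos : seq V) (l : V) (s : seq V) : Prop :=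
  reflection_order pos s /\
  (forall a b c, poslt0 pos l a -> poseq0 pos l b -> posgt0 pos l c ->
     prec s a b && prec s b c) /\
  (forall a b, poslt0 pos l a -> poseq0 pos l b -> prec s a b) /\
  (forall b c, poseq0 pos l b -> posgt0 pos l c -> prec s b c) /\
  (forall a c, poslt0 pos l a -> posgt0 pos l c -> prec s a c).

Definition act_set (w : 'M[R]_n) (pos : seq V) : seq V := [seq a *m w | a <- pos].

Definition RO_w (pos : seq V) (l : V) (w : 'M[R]_n) (t : seq V) : Prop :=
  reflection_order (act_set w pos) t /\
  (forall c a b, posgt0 pos l c -> poslt0 pos l a -> poseq0 pos l b ->
     prec t c (- a) && prec t (- a) (- b)) /\
  (forall c a, posgt0 pos l c -> poslt0 pos l a -> prec t c (- a)) /\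
  (forall a b, poslt0 pos l a -> poseq0 pos l b -> prec t (- a) (- b)) /\
  (forall c b, posgt0 pos l c -> poseq0 pos l b -> prec t c (- b)).

Definition induced_order (pos : seq V) (l : V) (s : seq V) : seq V :=
  [seq a <- s | posgt0 pos l a] ++
  [seq - a | a <- s & poslt0 pos l a] ++
  [seq - a | a <- s & poseq0 pos l a].

End RootSystems.

(* Main.v *)
Require Import Defs.
From mathcomp Require Import all_boot all_order all_algebra.
From mathcomp Require Import ring lra zify.
Import Order.TTheory GRing.Theory Num.Theory.
Local Open Scope ring_scope.
Set Implicit Arguments. Unset Strict Implicit.

Lemma index_cons' (T : eqType) (x z : T) (s : seq T) :
  index x (z :: s) = if z == x then 0%N else (index x s).+1.
Proof. by []. Qed.

Lemma index_filter (T : eqType) (p : pred T) (s : seq T) x y : p x -> p y ->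
  (index x (filter p s) < index y (filter p s))%N = (index x s < index y s)%N.
Proof.
move=> px py; elim: s => [|z s IH] //.
rewrite [filter p (z :: s)]/=.
case pz: (p z); rewrite !index_cons'.
  by case: (z == x); case: (z == y).
have -> : (z == x) = false by apply/eqP => zx; move: pz; rewrite zx px.
by have -> : (z == y) = false by apply/eqP => zx; move: pz; rewrite zx py.
Qed.

Lemma filter_none (T : Type) (p : pred T) (s : seq T) :
  (forall x, List.In x s -> ~~ p x) -> filter p s = [::].
Proof.
elim: s => //= x s IH H; rewrite (negbTE (H x (or_introl erefl))) IH // => y Hy.
by apply: H; right.
Qed.

Lemma filter_none' (T : eqType) (p : pred T) (s : seq T) :
  (forall x, x \in s -> ~~ p x) -> filter p s = [::].
Proof.
elim: s => //= x s IH H; rewrite (negbTE (H x (mem_head _ _))) IH // => y Hy.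
by apply: H; rewrite inE Hy orbT.
Qed.

Lemma tr_eq (b c : bool) : b = c -> b -> c. Proof. by move->. Qed.

Lemma block3 (T : eqType) (A B C : pred T) : forall t : seq T, uniq t ->
  (forall x, x \in t -> [|| A x, B x | C x]) ->
  (forall x, x \in t -> A x -> ~~ B x && ~~ C x) ->
  (forall x, x \in t -> B x -> ~~ C x) ->
  (forall x y, x \in t -> y \in t -> A x -> B y -> (index x t < index y t)%N) ->
  (forall x y, x \in t -> y \in t -> A x -> C y -> (index x t < index y t)%N) ->
  (forall x y, x \in t -> y \in t -> B x -> C y -> (index x t < index y t)%N) ->
  t = filter A t ++ filter B t ++ filter C t.
Proof.
elim=> [|z t IH] //; rewrite cons_uniq => /andP[zt ut] cov exA exB pAB pAC pBC.
have sub : forall x, x \in t -> x \in z :: t by move=> x xt; rewrite inE xt orbT.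
have ne : forall x, x \in t -> (z == x) = false.
  by move=> x xt; apply/eqP => zx; move: zt; rewrite zx xt.
have tr : forall x y, x \in t -> y \in t ->
  (index x (z :: t) < index y (z :: t))%N = (index x t < index y t)%N.
  by move=> x y xt yt; rewrite !index_cons' ne // ne.
have IH' := IH ut (fun x xt => cov x (sub x xt)) (fun x xt => exA x (sub x xt))
  (fun x xt => exB x (sub x xt))
  (fun x y xt yt ax ay => @tr_eq _ _ (tr x y xt yt) (pAB x y (sub x xt) (sub y yt) ax ay))
  (fun x y xt yt ax ay => @tr_eq _ _ (tr x y xt yt) (pAC x y (sub x xt) (sub y yt) ax ay))
  (fun x y xt yt ax ay => @tr_eq _ _ (tr x y xt yt) (pBC x y (sub x xt) (sub y yt) ax ay)).
have zin := mem_head z t.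
rewrite [filter A _]/= [filter B _]/= [filter C _]/=.
case Az: (A z).
  have /andP[/negbTE -> /negbTE ->] := exA z zin Az.
  by rewrite /= {1}IH'.
have nA : filter A t = [::] -> z :: t = z :: filter B t ++ filter C t -> True by [].
case Bz: (B z).
  rewrite (negbTE (exB z zin Bz)).
  have FA : filter A t = [::].
    apply: filter_none' => y yt; apply/negP => Ay.
    have := pAB y z (sub y yt) zin Ay Bz.
    by rewrite index_head.
  by rewrite {1}IH' FA.
have Cz : C z by have := cov z zin; rewrite Az Bz.
rewrite Cz.
have FA : filter A t = [::].
  apply: filter_none' => y yt; apply/negP => Ay.
  by have := pAC y z (sub y yt) zin Ay Cz; rewrite index_head.
have FB : filter B t = [::].
  apply: filter_none' => y yt; apply/negP => Ay.
  by have := pBC y z (sub y yt) zin Ay Cz; rewrite index_head.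
by rewrite {1}IH' FA FB.
Qed.

Section Comb.
Variables (R : realFieldType) (n : nat).
Local Notation V := 'rV[R]_n.
Variables (pos : seq V) (l : V) (w0 : 'M[R]_n) (L F : V -> R).
Hypothesis HLD : forall x y, L (x + y) = L x + L y.
Hypothesis HLN : forall x, L (- x) = - L x.
Hypothesis HFD : forall x y, F (x + y) = F x + F y.
Hypothesis HFN : forall x, F (- x) = - F x.
Hypothesis HFpos : forall a, a \in pos -> 0 < F a.
Hypothesis Hupos : uniq pos.
Hypothesis HP1 : forall a, posgt0 pos l a = (a \in pos) && (0 < L a).
Hypothesis HP2 : forall a, poslt0 pos l a = (a \in pos) && (L a < 0).
Hypothesis HP3 : forall a, poseq0 pos l a = (a \in pos) && (L a == 0).
Local Notation W := (act_set w0 pos).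
Local Notation P1 := (posgt0 pos l).
Local Notation P2 := (poslt0 pos l).
Local Notation P3 := (poseq0 pos l).
Hypothesis HW : forall x, (x \in W) = [|| P1 x, P2 (- x) | P3 (- x)].
Hypothesis HWu : uniq W.

Lemma negpos a : a \in pos -> (- a \in pos) = false.
Proof.
move=> Ha; apply/negP => Hn; have := HFpos Hn; rewrite HFN oppr_gt0.
by have := HFpos Ha => h1 h2; have := lt_trans h1 h2; rewrite ltxx.
Qed.

Lemma P1pos a : P1 a -> a \in pos. Proof. by rewrite HP1 => /andP[]. Qed.
Lemma P2pos a : P2 a -> a \in pos. Proof. by rewrite HP2 => /andP[]. Qed.
Lemma P3pos a : P3 a -> a \in pos. Proof. by rewrite HP3 => /andP[]. Qed.

Lemma P1N a : P1 a -> [&& ~~ P1 (- a), ~~ P2 (- a) & ~~ P3 (- a)].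
Proof. by move/P1pos => h; rewrite HP1 HP2 HP3 negpos. Qed.
Lemma P2N a : P2 a -> [&& ~~ P1 (- a), ~~ P2 (- a) & ~~ P3 (- a)].
Proof. by move/P2pos => h; rewrite HP1 HP2 HP3 negpos. Qed.
Lemma P3N a : P3 a -> [&& ~~ P1 (- a), ~~ P2 (- a) & ~~ P3 (- a)].
Proof. by move/P3pos => h; rewrite HP1 HP2 HP3 negpos. Qed.

Lemma P12 a : P1 a -> ~~ P2 a && ~~ P3 a.
Proof. rewrite HP1 HP2 HP3 => /andP[-> h] /=; apply/andP; split; lra. Qed.
Lemma P23 a : P2 a -> ~~ P1 a && ~~ P3 a.
Proof. rewrite HP1 HP2 HP3 => /andP[-> h] /=; apply/andP; split; lra. Qed.
Lemma P31 a : P3 a -> ~~ P1 a && ~~ P2 a.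
Proof. rewrite HP1 HP2 HP3 => /andP[-> /eqP h] /=; apply/andP; split; lra. Qed.

Lemma Pcov a : a \in pos -> [|| P1 a, P2 a | P3 a].
Proof. by move=> h; rewrite HP1 HP2 HP3 h /=; case: ltrgtP. Qed.

Lemma count3 (s : seq V) : {subset s <= pos} ->
  (count P1 s + count P2 s + count P3 s)%N = size s.
Proof.
elim: s => //= x s IH sub.
have xp : x \in pos by apply: sub; rewrite inE eqxx.
rewrite -[size s]IH; last by move=> y ys; apply: sub; rewrite inE ys orbT.
have := Pcov xp; have := P12 (a:=x); have := P23 (a:=x); have := P31 (a:=x).
case: (P1 x); case: (P2 x); case: (P3 x) => //= *; lia.
Qed.

Lemma memN (s : seq V) x : (x \in [seq - a | a <- s]) = (- x \in s).
Proof.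
apply/mapP/idP => [[a Ha ->]|Hx]; first by rewrite opprK.
by exists (- x); rewrite ?opprK.
Qed.

Lemma indexN (s : seq V) a : index (- a) [seq - b | b <- s] = index a s.
Proof. by apply: index_map; apply: oppr_inj. Qed.

Lemma mapNK (u : seq V) : [seq - a | a <- [seq - b | b <- u]] = u.
Proof. by elim: u => //= x u ->; rewrite opprK. Qed.

Lemma prec_catl (s1 s2 : seq V) x y : x \in s1 -> y \notin s1 -> prec (s1 ++ s2) x y.
Proof.
move=> xs ys; rewrite /prec !index_cat xs (negbTE ys).
by apply: leq_trans (leq_addr _ _); rewrite index_mem.
Qed.

Lemma prec_catr (s1 s2 : seq V) x y : x \notin s1 -> y \notin s1 ->
  prec (s1 ++ s2) x y = prec s2 x y.
Proof. by move=> xs ys; rewrite /prec !index_cat (negbTE xs) (negbTE ys) ltn_add2l. Qed.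

Lemma prec_asym (s : seq V) x y : prec s x y -> prec s y x = false.
Proof. by rewrite /prec => h; apply/negbTE; rewrite -leqNgt ltnW. Qed.

Lemma prec_trans (s : seq V) x y z : prec s x y -> prec s y z -> prec s x z.
Proof. exact: ltn_trans. Qed.

Section Ind.
Variable s : seq V.
Hypothesis Hs : s =i pos.
Local Notation t := (induced_order pos l s).

Lemma ind_mem x : (x \in t) = (x \in W).
Proof.
rewrite HW !mem_cat !memN !mem_filter !Hs.
rewrite (andb_idr (@P1pos x)) (andb_idr (@P2pos (- x))) (andb_idr (@P3pos (- x))).
by [].
Qed.

Lemma in1 x : (x \in [seq a <- s | P1 a]) = P1 x.
Proof. by rewrite mem_filter Hs (andb_idr (@P1pos x)). Qed.
Lemma in2 x : (x \in [seq - a | a <- s & P2 a]) = P2 (- x).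
Proof. by rewrite memN mem_filter Hs (andb_idr (@P2pos (- x))). Qed.

Lemma prec11 x y : P1 x -> P1 y -> prec t x y = prec s x y.
Proof.
move=> px py; rewrite /prec /induced_order !index_cat !in1 px py.
exact: index_filter.
Qed.

Lemma prec22 a b : P2 a -> P2 b -> prec t (- a) (- b) = prec s a b.
Proof.
move=> pa pb; have /and3P[na _ _] := P2N pa; have /and3P[nb _ _] := P2N pb.
rewrite /induced_order prec_catr ?in1 //.
rewrite /prec !index_cat !in2 !opprK pa pb !indexN; exact: index_filter.
Qed.

Lemma prec33 a b : P3 a -> P3 b -> prec t (- a) (- b) = prec s a b.
Proof.
move=> pa pb; have /and3P[na _ _] := P3N pa; have /and3P[nb _ _] := P3N pb.
have /andP[_ ma] := P31 pa; have /andP[_ mb] := P31 pb.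
rewrite /induced_order prec_catr ?in1 // prec_catr ?in2 ?opprK //.
rewrite /prec !indexN; exact: index_filter.
Qed.

Lemma prec12 x y : P1 x -> P2 (- y) -> prec t x y.
Proof.
move=> px py; rewrite /induced_order prec_catl ?in1 //.
by have /and3P[] := P2N py; rewrite opprK.
Qed.

Lemma prec13 x y : P1 x -> P3 (- y) -> prec t x y.
Proof.
move=> px py; rewrite /induced_order prec_catl ?in1 //.
by have /and3P[] := P3N py; rewrite opprK.
Qed.

Lemma prec23 x y : P2 (- x) -> P3 (- y) -> prec t x y.
Proof.
move=> px py; rewrite /induced_order prec_catr ?in1.
- rewrite prec_catl ?in2 //; by have /andP[_ ->] := P31 py.
- by have /and3P[] := P2N px; rewrite opprK.
- by have /and3P[] := P3N py; rewrite opprK.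
Qed.

Lemma size_ind : size t = size s.
Proof.
rewrite /induced_order !size_cat !size_map !size_filter addnA.
by apply: count3 => x; rewrite Hs.
Qed.

End Ind.

Lemma Wcov x : x \in W -> [|| P1 x, P2 (- x) | P3 (- x)].
Proof. by rewrite HW. Qed.


Lemma P1E x : P1 x -> [/\ x \in pos, 0 < L x & 0 < F x].
Proof. move=> h; have hp := P1pos h; move: h; rewrite HP1 hp /= => ?; split => //; exact: HFpos. Qed.
Lemma P2E x : P2 x -> [/\ x \in pos, L x < 0 & 0 < F x].
Proof. move=> h; have hp := P2pos h; move: h; rewrite HP2 hp /= => ?; split => //; exact: HFpos. Qed.
Lemma P3E x : P3 x -> [/\ x \in pos, L x = 0 & 0 < F x].
Proof. move=> h; have hp := P3pos h; move: h; rewrite HP3 hp /= => /eqP ?; split => //; exact: HFpos. Qed.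

Definition G (t : seq V) x y :=
  (prec t x (x + y) && prec t (x + y) y) || (prec t y (x + y) && prec t (x + y) x).

Lemma Gsym t x y : G t x y = G t y x.
Proof. by rewrite /G addrC orbC. Qed.

Lemma inW1 x : P1 x -> x \in W. Proof. by rewrite HW => ->. Qed.
Lemma inW2 x : P2 (- x) -> x \in W. Proof. by rewrite HW => ->; rewrite orbT. Qed.
Lemma inW3 x : P3 (- x) -> x \in W. Proof. by rewrite HW => ->; rewrite !orbT. Qed.

Section Part1.
Variable s : seq V.
Hypothesis Hs : s =i pos.
Hypothesis refl : forall a b, a \in pos -> b \in pos -> a + b \in pos -> G s a b.
Hypothesis c12 : forall a b, P2 a -> P3 b -> prec s a b.
Hypothesis c23 : forall b c, P3 b -> P1 c -> prec s b c.
Hypothesis c13 : forall a c, P2 a -> P1 c -> prec s a c.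
Local Notation t := (induced_order pos l s).

Lemma prec22' x y : P2 (- x) -> P2 (- y) -> prec t x y = prec s (- x) (- y).
Proof. by move=> px py; have := prec22 Hs px py; rewrite !opprK. Qed.
Lemma prec33' x y : P3 (- x) -> P3 (- y) -> prec t x y = prec s (- x) (- y).
Proof. by move=> px py; have := prec33 Hs px py; rewrite !opprK. Qed.

Lemma case11 x y : P1 x -> P1 y -> x + y \in W -> G t x y.
Proof.
move=> px py hz; have [_ _ fx] := P1E px; have [_ _ fy] := P1E py.
case/or3P: (Wcov hz) => [pz|/P2E[_ _]|/P3E[_ _]]; rewrite ?HFN ?HFD; last 2 first.
- move=> *; lra.
- move=> *; lra.
have := refl (P1pos px) (P1pos py) (P1pos pz).
by rewrite /G !prec11.
Qed.

Lemma case22 x y : P2 (- x) -> P2 (- y) -> x + y \in W -> G t x y.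
Proof.
move=> px py hz; have pz : P2 (- (x + y)).
  case/or3P: (Wcov hz) => [/P1E[_ _]|//|/P3E[_]];
  rewrite ?HLN ?HFN ?HFD ?HLD; case/P2E: px => _; case/P2E: py => _;
  rewrite ?HLN ?HFN; move=> *; lra.
have := refl (P2pos px) (P2pos py); rewrite -opprD => /(_ (P2pos pz)).
rewrite /G !prec22' //; by rewrite opprD.
Qed.

Lemma case33 x y : P3 (- x) -> P3 (- y) -> x + y \in W -> G t x y.
Proof.
move=> px py hz; have pz : P3 (- (x + y)).
  case/or3P: (Wcov hz) => [/P1E[_ _]|/P2E[_]|//];
  rewrite ?HLN ?HFN ?HFD ?HLD; case/P3E: px => _; case/P3E: py => _;
  rewrite ?HLN ?HFN; move=> *; lra.
have := refl (P3pos px) (P3pos py); rewrite -opprD => /(_ (P3pos pz)).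
rewrite /G !prec33' //; by rewrite opprD.
Qed.

Lemma case12 x y : P1 x -> P2 (- y) -> x + y \in W -> G t x y.
Proof.
move=> px py hz.
have hxy : ~~ prec s x (- y) by apply/negbT/prec_asym/c13.
case/or3P: (Wcov hz) => [pz|pz|/P3E[_]].
- have e : - y + (x + y) = x by rewrite addrC addrK.
  have := refl (P2pos py) (P1pos pz).
  rewrite e => /(_ (P1pos px)); rewrite /G e.
  case/orP => /andP[h1 h2]; last by case: (negP hxy h2).
  apply/orP; left; apply/andP; split; [by rewrite prec11 | exact: prec12].
- have e : x - (x + y) = - y by rewrite opprD addrA subrr add0r.
  have := refl (P1pos px) (P2pos pz).
  rewrite e => /(_ (P2pos py)); rewrite /G e.
  case/orP => /andP[h1 h2]; first by case: (negP hxy h1).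
  apply/orP; left; apply/andP; split; [exact: prec12 | by rewrite prec22'].
- rewrite HLN HLD; case/P1E: px => _ ? _; case/P2E: py => _; rewrite HLN => *; lra.
Qed.

Lemma case13 x y : P1 x -> P3 (- y) -> x + y \in W -> G t x y.
Proof.
move=> px py hz.
have hxy : ~~ prec s x (- y) by apply/negbT/prec_asym/c23.
case/or3P: (Wcov hz) => [pz|pz|/P3E[_]].
- have e : - y + (x + y) = x by rewrite addrC addrK.
  have := refl (P3pos py) (P1pos pz).
  rewrite e => /(_ (P1pos px)); rewrite /G e.
  case/orP => /andP[h1 h2]; last by case: (negP hxy h2).
  apply/orP; left; apply/andP; split; [by rewrite prec11 | exact: prec13].
- by apply/orP; left; rewrite prec12 //= prec23.
- rewrite HLN HLD; case/P1E: px => _ ? _; case/P3E: py => _; rewrite HLN => *; lra.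
Qed.

Lemma case23 x y : P2 (- x) -> P3 (- y) -> x + y \in W -> G t x y.
Proof.
move=> px py hz.
have pz : P2 (- (x + y)).
  case/or3P: (Wcov hz) => [/P1E[_ _]|//|/P3E[_]];
  rewrite ?HLN ?HFN ?HFD ?HLD; case/P2E: px => _; case/P3E: py => _;
  rewrite ?HLN ?HFN; move=> *; lra.
have hxy := c12 px py.
have e : - x + - y = - (x + y) by rewrite opprD.
have := refl (P2pos px) (P3pos py); rewrite e => /(_ (P2pos pz)).
rewrite /G e; case/orP => /andP[h1 h2].
  by apply/orP; left; rewrite prec22' // h1 prec23.
by have := prec_trans h1 h2; rewrite (prec_asym hxy).
Qed.

Lemma reflW x y : x \in W -> y \in W -> x + y \in W -> G t x y.
Proof.
move=> hx hy hz; have hz' : y + x \in W by rewrite addrC.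
case/or3P: (Wcov hx) => px; case/or3P: (Wcov hy) => py;
  first [exact: case11 px py hz | exact: case22 px py hz | exact: case33 px py hz
    | exact: case12 px py hz | exact: case13 px py hz | exact: case23 px py hz
    | rewrite Gsym; first [exact: case12 py px hz' | exact: case13 py px hz'
                          | exact: case23 py px hz']].
Qed.

End Part1.


Lemma part1 s : RO_pos pos l s -> RO_w pos l w0 (induced_order pos l s).
Proof.
case=> [[[us ps] refl] [_ [c12 [c23 c13]]]].
have Hs : s =i pos := perm_mem ps.
have tW := ind_mem Hs.
have ut : uniq (induced_order pos l s).
  apply: (leq_size_uniq HWu) => [x|]; first by rewrite tW.
  by rewrite size_ind // (perm_size ps) size_map.
split; first split.
- by split => //; apply: uniq_perm.
- move=> x y hx hy hz; exact: (reflW Hs refl c12 c23 c13 hx hy hz).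
split; last split; last split.
- move=> c a b pc pa pb; apply/andP; split.
    by apply: prec12 => //; rewrite opprK.
  by apply: prec23 => //; rewrite opprK.
- by move=> c a pc pa; apply: prec12 => //; rewrite opprK.
- by move=> a b pa pb; apply: prec23 => //; rewrite opprK.
- by move=> c b pc pb; apply: prec13 => //; rewrite opprK.
Qed.

Definition inv (t : seq V) := [seq - x | x <- t & P2 (- x)] ++
  [seq - x | x <- t & P3 (- x)] ++ [seq x <- t | P1 x].

Lemma filter_all' (p : pred V) u : (forall x, x \in u -> p x) -> filter p u = u.
Proof. by move=> h; apply/all_filterP/allP. Qed.
Lemma filterN_none (p : pred V) u :
  (forall a, a \in u -> ~~ p (- a)) -> filter p [seq - a | a <- u] = [::].
Proof. by move=> h; apply: filter_none' => x /mapP[a au ->]; exact: h. Qed.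
Lemma filterN_all (p : pred V) u :
  (forall a, a \in u -> p (- a)) -> filter p [seq - a | a <- u] = [seq - a | a <- u].
Proof. by move=> h; apply: filter_all' => x /mapP[a au ->]; exact: h. Qed.

Lemma inv_ind s : s =i pos ->
  inv (induced_order pos l s) = filter P2 s ++ filter P3 s ++ filter P1 s.
Proof.
move=> Hs; rewrite /inv /induced_order !filter_cat.
have e1 : [seq x <- [seq a <- s | P1 a] | P2 (- x)] = [::].
  by apply: filter_none' => x; rewrite mem_filter => /andP[px _]; have /and3P[_ -> _] := P1N px.
have e2 : [seq x <- [seq - a | a <- s & P2 a] | P2 (- x)] = [seq - a | a <- s & P2 a].
  by apply: filterN_all => a; rewrite mem_filter opprK => /andP[].
have e3 : [seq x <- [seq - a | a <- s & P3 a] | P2 (- x)] = [::].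
  by apply: filterN_none => a; rewrite mem_filter opprK => /andP[/P31/andP[]].
have e4 : [seq x <- [seq a <- s | P1 a] | P3 (- x)] = [::].
  by apply: filter_none' => x; rewrite mem_filter => /andP[px _]; have /and3P[_ _ ->] := P1N px.
have e5 : [seq x <- [seq - a | a <- s & P2 a] | P3 (- x)] = [::].
  by apply: filterN_none => a; rewrite mem_filter opprK => /andP[/P23/andP[]].
have e6 : [seq x <- [seq - a | a <- s & P3 a] | P3 (- x)] = [seq - a | a <- s & P3 a].
  by apply: filterN_all => a; rewrite mem_filter opprK => /andP[].
have e7 : [seq x <- [seq a <- s | P1 a] | P1 x] = [seq a <- s | P1 a] by rewrite filter_id.
have e8 : [seq x <- [seq - a | a <- s & P2 a] | P1 x] = [::].
  by apply: filterN_none => a; rewrite mem_filter => /andP[/P2N/and3P[]].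
have e9 : [seq x <- [seq - a | a <- s & P3 a] | P1 x] = [::].
  by apply: filterN_none => a; rewrite mem_filter => /andP[/P3N/and3P[]].
by rewrite e1 e2 e3 e4 e5 e6 e7 e8 e9 /= !cats0 !mapNK.
Qed.

Lemma blocks s : RO_pos pos l s -> s = filter P2 s ++ filter P3 s ++ filter P1 s.
Proof.
case=> [[[us ps] _] [_ [c12 [c23 c13]]]].
have Hs : s =i pos := perm_mem ps.
apply: block3 => //.
- move=> x; rewrite Hs => /Pcov; by case/or3P => ->; rewrite ?orbT.
- by move=> x _ /P23; rewrite andbC.
- by move=> x _ /P31/andP[].
- by move=> x y _ _; apply: c12.
- by move=> x y _ _; apply: c13.
- by move=> x y _ _; apply: c23.
Qed.

Lemma part2 s1 s2 : RO_pos pos l s1 -> RO_pos pos l s2 ->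
  induced_order pos l s1 = induced_order pos l s2 -> s1 = s2.
Proof.
move=> H1 H2 E.
have Hs1 : s1 =i pos by case: H1 => [[[_ /perm_mem]]].
have Hs2 : s2 =i pos by case: H2 => [[[_ /perm_mem]]].
transitivity (inv (induced_order pos l s1)); first by rewrite inv_ind // -blocks.
by rewrite E inv_ind // -blocks.
Qed.

Section Part3.
Variable t : seq V.
Hypothesis Ht : t =i W.
Hypothesis ut : uniq t.
Hypothesis reflt : forall a b, a \in W -> b \in W -> a + b \in W -> G t a b.
Hypothesis d12 : forall c a, P1 c -> P2 a -> prec t c (- a).
Hypothesis d23 : forall a b, P2 a -> P3 b -> prec t (- a) (- b).
Hypothesis d13 : forall c b, P1 c -> P3 b -> prec t c (- b).
Local Notation s := (inv t).

Lemma tblocks : t = filter P1 t ++ filter (fun x => P2 (- x)) t ++ filter (fun x => P3 (- x)) t.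
Proof.
apply: block3 => //.
- by move=> x; rewrite Ht => /Wcov.
- by move=> x _ /P1N/and3P[_ -> ->].
- by move=> x _ /P23/andP[].
- by move=> x y _ _ px py; have := d12 px py; rewrite opprK.
- by move=> x y _ _ px py; have := d13 px py; rewrite opprK.
- by move=> x y _ _ px py; have := d23 px py; rewrite !opprK.
Qed.

Lemma sP2 x : (x \in [seq - y | y <- t & P2 (- y)]) = P2 x.
Proof.
rewrite memN mem_filter Ht opprK; apply: andb_idr => h.
by apply: inW2; rewrite opprK.
Qed.
Lemma sP3 x : (x \in [seq - y | y <- t & P3 (- y)]) = P3 x.
Proof.
rewrite memN mem_filter Ht opprK; apply: andb_idr => h.
by apply: inW3; rewrite opprK.
Qed.
Lemma sP1 x : (x \in [seq y <- t | P1 y]) = P1 x.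
Proof. by rewrite mem_filter Ht; apply: andb_idr => h; apply: inW1. Qed.

Lemma memS : s =i pos.
Proof.
move=> x; rewrite /inv !mem_cat sP1 sP2 sP3.
apply/idP/idP.
  by case/or3P => [/P2pos|/P3pos|/P1pos].
by move/Pcov; case/or3P => ->; rewrite ?orbT.
Qed.

Lemma ind_inv : induced_order pos l s = t.
Proof.
rewrite /inv /induced_order !filter_cat.
have e1 : [seq x <- [seq - y | y <- t & P2 (- y)] | P1 x] = [::].
  by apply: filterN_none => a; rewrite mem_filter => /andP[/P23/andP[]].
have e2 : [seq x <- [seq - y | y <- t & P3 (- y)] | P1 x] = [::].
  by apply: filterN_none => a; rewrite mem_filter => /andP[/P31/andP[]].
have e3 : [seq x <- [seq y <- t | P1 y] | P1 x] = [seq y <- t | P1 y] by rewrite filter_id.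
have e4 : [seq x <- [seq - y | y <- t & P2 (- y)] | P2 x] = [seq - y | y <- t & P2 (- y)].
  by apply: filterN_all => a; rewrite mem_filter => /andP[].
have e5 : [seq x <- [seq - y | y <- t & P3 (- y)] | P2 x] = [::].
  by apply: filterN_none => a; rewrite mem_filter => /andP[/P31/andP[]].
have e6 : [seq x <- [seq y <- t | P1 y] | P2 x] = [::].
  by apply: filter_none' => x; rewrite mem_filter => /andP[/P12/andP[]].
have e7 : [seq x <- [seq - y | y <- t & P2 (- y)] | P3 x] = [::].
  by apply: filterN_none => a; rewrite mem_filter => /andP[/P23/andP[]].
have e8 : [seq x <- [seq - y | y <- t & P3 (- y)] | P3 x] = [seq - y | y <- t & P3 (- y)].
  by apply: filterN_all => a; rewrite mem_filter => /andP[].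
have e9 : [seq x <- [seq y <- t | P1 y] | P3 x] = [::].
  by apply: filter_none' => x; rewrite mem_filter => /andP[/P12/andP[]].
rewrite e1 e2 e3 e4 e5 e6 e7 e8 e9 /= !cats0 !mapNK.
exact: esym tblocks.
Qed.

Lemma precs11 x y : P1 x -> P1 y -> prec s x y = prec t x y.
Proof. by move=> px py; rewrite -(prec11 memS) // ind_inv. Qed.
Lemma precs22 x y : P2 x -> P2 y -> prec s x y = prec t (- x) (- y).
Proof. by move=> px py; rewrite -(prec22 memS) // ind_inv. Qed.
Lemma precs33 x y : P3 x -> P3 y -> prec s x y = prec t (- x) (- y).
Proof. by move=> px py; rewrite -(prec33 memS) // ind_inv. Qed.

Lemma precS23 a b : P2 a -> P3 b -> prec s a b.
Proof. move=> pa pb; apply: prec_catl; rewrite sP2 //; by have /andP[_ ->] := P31 pb. Qed.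
Lemma precS21 a b : P2 a -> P1 b -> prec s a b.
Proof. move=> pa pb; apply: prec_catl; rewrite sP2 //; by have /andP[-> _] := P12 pb. Qed.
Lemma precS31 a b : P3 a -> P1 b -> prec s a b.
Proof.
move=> pa pb; rewrite /inv prec_catr ?sP2.
- by apply: prec_catl; rewrite sP3 //; have /andP[_ ->] := P12 pb.
- by have /andP[_ ->] := P31 pa.
- by have /andP[-> _] := P12 pb.
Qed.


Lemma inW2' a : P2 a -> - a \in W. Proof. by move=> h; apply: inW2; rewrite opprK. Qed.
Lemma inW3' a : P3 a -> - a \in W. Proof. by move=> h; apply: inW3; rewrite opprK. Qed.

Lemma sc11 a b : P1 a -> P1 b -> a + b \in pos -> G s a b.
Proof.
move=> pa pb hab.
have [_ la _] := P1E pa; have [_ lb _] := P1E pb.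
have pab : P1 (a + b).
  case/or3P: (Pcov hab) => // [/P2E[_]|/P3E[_]]; rewrite HLD => *; lra.
have := reflt (inW1 pa) (inW1 pb) (inW1 pab).
by rewrite /G !precs11.
Qed.

Lemma sc22 a b : P2 a -> P2 b -> a + b \in pos -> G s a b.
Proof.
move=> pa pb hab.
have [_ la _] := P2E pa; have [_ lb _] := P2E pb.
have pab : P2 (a + b).
  case/or3P: (Pcov hab) => // [/P1E[_]|/P3E[_]]; rewrite HLD => *; lra.
have e : - a + - b = - (a + b) by rewrite opprD.
have := reflt (inW2' pa) (inW2' pb); rewrite e => /(_ (inW2' pab)).
by rewrite /G e !precs22.
Qed.

Lemma sc33 a b : P3 a -> P3 b -> a + b \in pos -> G s a b.
Proof.
move=> pa pb hab.
have [_ la _] := P3E pa; have [_ lb _] := P3E pb.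
have pab : P3 (a + b).
  case/or3P: (Pcov hab) => // [/P1E[_]|/P2E[_]]; rewrite HLD => *; lra.
have e : - a + - b = - (a + b) by rewrite opprD.
have := reflt (inW3' pa) (inW3' pb); rewrite e => /(_ (inW3' pab)).
by rewrite /G e !precs33.
Qed.

Lemma sc21 a b : P2 a -> P1 b -> a + b \in pos -> G s a b.
Proof.
move=> pa pb hab.
have hba : ~~ prec t (- a) b by apply/negbT/prec_asym/d12.
case/or3P: (Pcov hab) => pab.
- apply/orP; left; apply/andP; split; first exact: precS21.
  have e : a + b - a = b by rewrite addrC addKr.
  have := reflt (inW1 pab) (inW2' pa); rewrite e => /(_ (inW1 pb)).
  rewrite /G e; case/orP => /andP[h1 h2]; first by rewrite precs11.
  by case: (negP hba h1).
- apply/orP; left; apply/andP; split; last exact: precS21.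
  have e : b - (a + b) = - a by rewrite opprD addrCA subrr addr0.
  have := reflt (inW1 pb) (inW2' pab); rewrite e => /(_ (inW2' pa)).
  rewrite /G e; case/orP => /andP[h1 h2]; last by case: (negP hba h2).
  by rewrite precs22.
- by apply/orP; left; rewrite precS23 // precS31.
Qed.

Lemma sc23 a b : P2 a -> P3 b -> a + b \in pos -> G s a b.
Proof.
move=> pa pb hab.
have [_ la _] := P2E pa; have [_ lb _] := P3E pb.
have pab : P2 (a + b).
  case/or3P: (Pcov hab) => // [/P1E[_]|/P3E[_]]; rewrite HLD => *; lra.
have hab' := d23 pa pb.
apply/orP; left; apply/andP; split; last exact: precS23.
have e : - a + - b = - (a + b) by rewrite opprD.
have := reflt (inW2' pa) (inW3' pb); rewrite e => /(_ (inW2' pab)).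
rewrite /G e; case/orP => /andP[h1 h2]; first by rewrite precs22.
by have := prec_trans h1 h2; rewrite (prec_asym hab').
Qed.

Lemma sc31 a b : P3 a -> P1 b -> a + b \in pos -> G s a b.
Proof.
move=> pa pb hab.
have [_ la _] := P3E pa; have [_ lb _] := P1E pb.
have pab : P1 (a + b).
  case/or3P: (Pcov hab) => // [/P2E[_]|/P3E[_]]; rewrite HLD => *; lra.
have hba : ~~ prec t (- a) b by apply/negbT/prec_asym/d13.
apply/orP; left; apply/andP; split; first exact: precS31.
have e : a + b - a = b by rewrite addrC addKr.
have := reflt (inW1 pab) (inW3' pa); rewrite e => /(_ (inW1 pb)).
rewrite /G e; case/orP => /andP[h1 h2]; first by rewrite precs11.
by case: (negP hba h1).
Qed.

Lemma reflS a b : a \in pos -> b \in pos -> a + b \in pos -> G s a b.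
Proof.
move=> ha hb hab; have hab' : b + a \in pos by rewrite addrC.
case/or3P: (Pcov ha) => pa; case/or3P: (Pcov hb) => pb;
  first [exact: sc11 pa pb hab | exact: sc22 pa pb hab | exact: sc33 pa pb hab
    | exact: sc21 pa pb hab | exact: sc23 pa pb hab | exact: sc31 pa pb hab
    | rewrite Gsym; first [exact: sc21 pb pa hab' | exact: sc23 pb pa hab'
                          | exact: sc31 pb pa hab']].
Qed.

End Part3.

Lemma part3 t : RO_w pos l w0 t -> exists2 s, RO_pos pos l s & induced_order pos l s = t.
Proof.
case=> [[[ut pt] reflt] [_ [d12 [d23 d13]]]].
have Ht : t =i W := perm_mem pt.
have mS := memS Ht.
exists (inv t); last exact: ind_inv.
have us : uniq (inv t).
  apply: (leq_size_uniq Hupos) => [x|]; first by rewrite mS.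
  by rewrite -(size_ind mS) (ind_inv Ht ut d12 d23 d13) (perm_size pt) size_map.
split; first split.
- by split => //; apply: uniq_perm.
- move=> a b ha hb hab; exact: (reflS Ht ut reflt d12 d23 d13 ha hb hab).
split; last split; last split.
- move=> a b c pa pb pc; apply/andP; split; [exact: precS23 | exact: precS31].
- move=> a b pa pb; exact: precS23.
- move=> b c pb pc; exact: precS31.
- move=> a c pa pc; exact: precS21.
Qed.

End Comb.

Section Lie.
Variables (R : realFieldType) (n : nat).
Local Notation V := 'rV[R]_n.

Lemma dotE (u v : V) : dot u v = \sum_i u 0 i * v 0 i.
Proof. by rewrite /dot mxE; apply: eq_bigr => i _; rewrite mxE. Qed.

Lemma dotC (u v : V) : dot u v = dot v u.
Proof. by rewrite !dotE; apply: eq_bigr => i _; rewrite mulrC. Qed.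

Lemma dotDl (u v w : V) : dot (u + v) w = dot u w + dot v w.
Proof. by rewrite !dotE -big_split; apply: eq_bigr => i _; rewrite mxE mulrDl. Qed.

Lemma dotNl (u w : V) : dot (- u) w = - dot u w.
Proof. by rewrite !dotE -sumrN; apply: eq_bigr => i _; rewrite mxE mulNr. Qed.

Lemma dotZl c (u w : V) : dot (c *: u) w = c * dot u w.
Proof. by rewrite !dotE mulr_sumr; apply: eq_bigr => i _; rewrite mxE mulrA. Qed.

Lemma dotBl (u v w : V) : dot (u - v) w = dot u w - dot v w.
Proof. by rewrite dotDl dotNl. Qed.

Lemma dotDr (u v w : V) : dot w (u + v) = dot w u + dot w v.
Proof. by rewrite dotC dotDl !(dotC w). Qed.
Lemma dotNr (u w : V) : dot w (- u) = - dot w u.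
Proof. by rewrite dotC dotNl dotC. Qed.
Lemma dotZr c (u w : V) : dot w (c *: u) = c * dot w u.
Proof. by rewrite dotC dotZl dotC. Qed.
Lemma dotBr (u v w : V) : dot w (u - v) = dot w u - dot w v.
Proof. by rewrite dotDr dotNr. Qed.

Lemma dot_ge0 (u : V) : 0 <= dot u u.
Proof. by rewrite dotE; apply: sumr_ge0 => i _; rewrite -expr2 sqr_ge0. Qed.

Lemma dot_eq0 (u : V) : dot u u = 0 -> u = 0.
Proof.
rewrite dotE => h; apply/rowP => i; rewrite mxE.
have H0 : forall j : 'I_n, true -> 0 <= u 0 j * u 0 j.
  by move=> j _; rewrite -expr2 sqr_ge0.
have E := psumr_eq0P H0 h.
have E2 := E i isT.
by apply/eqP; rewrite -sqrf_eq0 expr2 E2.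
Qed.

Lemma dot_gt0 (u : V) : u != 0 -> 0 < dot u u.
Proof.
move=> h; rewrite lt_def dot_ge0 andbT; apply/eqP => /dot_eq0 e.
by rewrite e eqxx in h.
Qed.

Lemma reflE (x a : V) : x *m refl_mx a = x - pairing x a *: a.
Proof.
rewrite /refl_mx mulmxBr mulmx1 -scalemxAr mulmxA.
have -> : x *m a^T = (dot x a)%:M by rewrite [LHS]mx11_scalar.
by rewrite mul_scalar_mx scalerA /pairing mulrAC.
Qed.

Lemma pairingDl (u v a : V) : pairing (u + v) a = pairing u a + pairing v a.
Proof. by rewrite /pairing dotDl mulrDr mulrDl. Qed.
Lemma pairingNl (u a : V) : pairing (- u) a = - pairing u a.
Proof. by rewrite /pairing dotNl mulrN mulNr. Qed.
Lemma pairingZl c (u a : V) : pairing (c *: u) a = c * pairing u a.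
Proof. rewrite /pairing dotZl; ring. Qed.

Lemma pairing_self (a : V) : a != 0 -> pairing a a = 2.
Proof. by move=> h; rewrite /pairing mulfK // gt_eqF // dot_gt0. Qed.

Lemma pairingE (v a : V) : pairing v a = dot v a * (2 / dot a a).
Proof. by rewrite /pairing mulrA [2 * _]mulrC. Qed.

Lemma refl_self (a : V) : a != 0 -> a *m refl_mx a = - a.
Proof.
move=> h; rewrite reflE pairing_self // scaler_nat mulr2n opprD addrA subrr add0r //.
Qed.

Lemma reflK (a x : V) : a != 0 -> x *m refl_mx a *m refl_mx a = x.
Proof.
move=> h; rewrite !reflE pairingDl pairingNl pairingZl pairing_self //.
set p := pairing x a.
have -> : p - p * 2 = - p by rewrite mulrDr mulr1 opprD addrA subrr add0r.
by rewrite scaleNr opprK subrK.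
Qed.

Lemma refl_dot (a x y : V) : a != 0 ->
  dot (x *m refl_mx a) (y *m refl_mx a) = dot x y.
Proof.
move=> h; have ha : dot a a != 0 by rewrite gt_eqF // dot_gt0.
rewrite !reflE !(dotBl, dotBr, dotZl, dotZr) /pairing ?(dotC a x) ?(dotC a y).
by field.
Qed.

End Lie.

Section Weyl.
Variables (R : realFieldType) (n : nat) (roots : seq 'rV[R]_n).
Local Notation V := 'rV[R]_n.
Hypothesis H0 : (0 : V) \notin roots.
Hypothesis Hrefl : forall a b, a \in roots -> b \in roots -> b *m refl_mx a \in roots.

Lemma root_neq0 a : a \in roots -> a != 0.
Proof. by move=> h; apply/eqP => e; move: H0; rewrite -e h. Qed.

Lemma root_neg a : a \in roots -> - a \in roots.
Proof. move=> h; rewrite -refl_self ?root_neq0 //; exact: Hrefl. Qed.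

Lemma weyl_props w : in_weyl roots w ->
  (forall x y, dot (x *m w) (y *m w) = dot x y) /\
  (forall x, x \in roots -> x *m w \in roots).
Proof.
case=> ts [/allP Hts ->] {w}.
elim: ts Hts => [|t ts IH] Hts /=.
  by split => [x y|x]; rewrite !mulmx1.
have ht : t \in roots by apply: Hts; rewrite inE eqxx.
have [IH1 IH2] : (forall x y, dot (x *m foldr (fun t M => refl_mx t *m M) 1%:M ts)
     (y *m foldr (fun t M => refl_mx t *m M) 1%:M ts) = dot x y) /\
   (forall x, x \in roots -> x *m foldr (fun t M => refl_mx t *m M) 1%:M ts \in roots).
  by apply: IH => x hx; apply: Hts; rewrite inE hx orbT.
split => [x y|x hx]; rewrite !mulmxA.
  by rewrite IH1 refl_dot // root_neq0.
by apply: IH2; apply: Hrefl.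
Qed.

Lemma in_weyl_mulr w a : in_weyl roots w -> a \in roots -> in_weyl roots (w *m refl_mx a).
Proof.
case=> ts [Hts ->] ha; exists (ts ++ [:: a]); split.
  by rewrite all_cat Hts /= ha.
rewrite foldr_cat /= mulmx1.
by elim: ts {Hts} => [|t ts IH] /=; [rewrite mul1mx | rewrite -mulmxA IH].
Qed.

Variable pos : seq V.
Variable f : V.
Hypothesis Hpos : forall a, (a \in pos) = (a \in roots) && (0 < dot f a).
Hypothesis Hreg : forall a, a \in roots -> dot f a != 0.
Hypothesis Hupos : uniq pos.

Lemma pos_root a : a \in pos -> a \in roots.
Proof. by rewrite Hpos => /andP[]. Qed.

Lemma notpos a : a \in roots -> (a \notin pos) = (- a \in pos).
Proof.
move=> h; have hn := root_neg h; rewrite !Hpos hn h /= dotNr oppr_gt0 -leNgt le_eqVlt.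
by rewrite (negbTE (Hreg h)).
Qed.

Lemma negpos' a : a \in pos -> (- a \in pos) = false.
Proof. by move=> h; apply/negbTE; rewrite -notpos ?negbK //; exact: pos_root. Qed.

Lemma countZ (p : pred V) s : (count p s)%:Z = \sum_(x <- s) ((p x : nat)%:Z).
Proof. by elim: s => [|x s IH] /=; rewrite ?big_nil ?big_cons // PoszD IH. Qed.

Lemma bruhat_len u v : bruhat_le roots pos u v ->
  (weyl_length roots pos u <= weyl_length roots pos v)%N.
Proof.
elim => // u0 v0 w1 [b _ [_ lt]] _ IH; exact: leq_trans (ltnW lt) IH.
Qed.

Lemma length_lt w b : in_weyl roots w -> b \in pos -> b *m w \in pos ->
  (weyl_length roots pos w < weyl_length roots pos (w *m refl_mx (b *m w)))%N.
Proof.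
move=> Hw hb hy.
have [Hd Hr] := weyl_props Hw.
have br := pos_root hb; have bn := root_neq0 br.
have rK : forall x : V, x *m refl_mx b *m refl_mx b = x by move=> x; exact: reflK x bn.
have Enew : forall x : V, x *m (w *m refl_mx (b *m w)) = (x *m refl_mx b) *m w.
  move=> x; rewrite mulmxA !reflE mulmxBl -scalemxAl /pairing !Hd //.
pose phi (x : V) := if x *m refl_mx b \in pos then x *m refl_mx b else - (x *m refl_mx b).
have phi_pos : forall x : V, x \in pos -> phi x \in pos.
  move=> x hx; rewrite /phi; case: ifP => // h.
  by rewrite -notpos ?h // Hrefl // pos_root.
have phiK : forall x : V, x \in pos -> phi (phi x) = x.
  move=> x hx; rewrite {2}/phi; case: ifP => h; rewrite /phi.
    by rewrite rK hx.
  by rewrite mulNmx rK negpos' // opprK.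
have Hperm : perm_eq (map phi pos) pos.
  apply: uniq_perm => //.
    rewrite map_inj_in_uniq // => x z hx hz e.
    by rewrite -(phiK x hx) e phiK.
  move=> x; apply/mapP/idP => [[z hz ->]|hx]; first exact: phi_pos.
  by exists (phi x); [exact: phi_pos | rewrite phiK].
have reidx : forall G : V -> int, \sum_(x <- pos) G (phi x) = \sum_(x <- pos) G x.
  by move=> G; rewrite -(big_map phi xpredT G); apply: perm_big.
pose O (x : V) := x *m w \notin pos.
pose N (x : V) := (x *m refl_mx b) *m w \notin pos.
pose T (x : V) := x *m refl_mx b \notin pos.
pose D (x : V) : int := if T x then 1 - 2 * (O x : nat)%:Z else 0.
have lenN : weyl_length roots pos (w *m refl_mx (b *m w)) = count N pos.
  by apply: eq_count => x; rewrite /N Enew.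
have point : forall x : V, x \in pos -> (N x : nat)%:Z - (O (phi x) : nat)%:Z = D (phi x).
  move=> x hx; have xr : x *m refl_mx b \in roots by apply: Hrefl => //; exact: pos_root.
  have [h|h] := boolP (x *m refl_mx b \in pos).
    have -> : phi x = x *m refl_mx b by rewrite /phi h.
    rewrite /D /T /N /O. rewrite rK hx /= subrr //.
  have -> : phi x = - (x *m refl_mx b) by rewrite /phi (negbTE h).
  rewrite /D /T /N /O !mulNmx rK (negpos' hx) /=.
  have xrw : x *m refl_mx b *m w \in roots by apply: Hr.
  rewrite (notpos (root_neg xrw)) opprK.
  by case: (_ \in pos) => /=.
have pair : forall x : V, x \in pos -> 0 <= D x + D (phi x).
  move=> x hx; have xr : x *m refl_mx b \in roots by apply: Hrefl => //; exact: pos_root.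
  have [h|h] := boolP (x *m refl_mx b \in pos).
    have -> : phi x = x *m refl_mx b by rewrite /phi h.
    by rewrite /D /T rK hx h.
  have -> : phi x = - (x *m refl_mx b) by rewrite /phi (negbTE h).
  rewrite /D /T !mulNmx rK (negpos' hx) h /=.
  have hphi : - (x *m refl_mx b) \in pos by rewrite -notpos.
  have [k Ek] : exists k, x *m refl_mx b = x - k *: b by exists (pairing x b); rewrite reflE.
  have Fx : 0 < dot f x by move: hx; rewrite Hpos => /andP[].
  have Fb : 0 < dot f b by move: hb; rewrite Hpos => /andP[].
  have Fy : 0 < dot f (b *m w) by move: hy; rewrite Hpos => /andP[].
  have kpos : 0 < k.
    move: hphi; rewrite Hpos Ek => /andP[_]; rewrite dotNr dotBr dotZr => H.
    have : 0 < k * dot f b by lra.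
    by rewrite pmulr_lgt0.
  have kFy : 0 < k * dot f (b *m w) by apply: mulr_gt0.
  rewrite /O Ek.
  have xw : x *m w \in roots by apply: Hr; exact: pos_root.
  have yw : (- (x - k *: b)) *m w \in roots by rewrite -Ek; apply: Hr; exact: root_neg.
  rewrite (notpos xw) (notpos yw).
  case e1: (- (x *m w) \in pos); case e2: (- (- (x - k *: b) *m w) \in pos) => //=.
  move: e1 e2; rewrite !Hpos => /andP[_ h1] /andP[_ h2].
  move: h1 h2; rewrite !mulNmx !opprK mulmxBl -scalemxAl dotNr dotBr dotZr => h1 h2.
  have : (0:R) < 0 by lra.
  by rewrite ltxx.
pose S := \sum_(x <- pos) D x.
have S2 : 0 < S + S.
  have -> : S + S = \sum_(x <- pos) (D x + D (phi x)) by rewrite big_split /= reidx.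
  rewrite (bigD1_seq b) //=.
  have -> : D b + D (phi b) = 2.
    have pb : phi b = b by rewrite /phi refl_self // negpos' // opprK.
    rewrite pb /D /T /O refl_self // negpos' //= hy /=.
    by [].
  apply: (@lt_le_trans _ _ 2) => //.
  rewrite lerDl big_seq_cond; apply: sumr_ge0 => x /andP[hx _]; exact: pair.
have SN : (count N pos)%:Z = (count O pos)%:Z + S.
  rewrite !countZ /S -(reidx (fun x => (O x : nat)%:Z)) -(reidx D) -big_split /=.
  by apply: eq_big_seq => x hx; rewrite -point // addrC subrK.
rewrite lenN; change (count O pos < count N pos)%N.
have : ((count O pos)%:Z < (count N pos)%:Z) by rewrite SN; lia.
by rewrite ltz_nat.
Qed.

End Weyl.

Unset Implicit Arguments. Set Strict Implicit.

Theorem proposition2p12 (R : realFieldType) (n : nat)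
    (roots pos : seq 'rV[R]_n) (l lp : 'rV[R]_n) (w0 : 'M[R]_n) :
  simple_root_system roots ->
  positive_system roots pos ->
  in_weight_lattice roots l ->
  (* lp = lambda_+ : the dominant weight in W lambda *)
  (forall a, a \in pos -> 0 <= pairing lp a) ->
  (exists2 u, in_weyl roots u & lp = l *m u) ->
  (* w0 = w(lambda) : the Bruhat-maximum of {w in W | w lambda_+ = lambda} *)
  in_weyl roots w0 -> lp *m w0 = l ->
  (forall w, in_weyl roots w -> lp *m w = l -> bruhat_le roots pos w w0) ->
  [/\ (forall s, RO_pos pos l s -> RO_w pos l w0 (induced_order pos l s)),
      (forall s1 s2, RO_pos pos l s1 -> RO_pos pos l s2 ->
         induced_order pos l s1 = induced_order pos l s2 -> s1 = s2)
    & (forall t, RO_w pos l w0 t ->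
         exists2 s, RO_pos pos l s & induced_order pos l s = t)].
Proof.
move=> [[Hur Hne H0] [Hnd [Hrefl [Hint [Hred Hirr]]]]] [Hupos [f [Hreg Hposm]]] _ Hdom _
  Hw0 Hlw0 Hmax.
have proot : forall a, a \in pos -> a \in roots by move=> a; rewrite Hposm => /andP[].
have [Hd Hr] := weyl_props H0 Hrefl Hw0.
have sgn : forall (v a : 'rV[R]_n), a != 0 -> [/\ (0 < pairing v a) = (0 < dot v a),
    (pairing v a < 0) = (dot v a < 0) & (pairing v a == 0) = (dot v a == 0)].
  move=> v a ha; have c0 : 0 < 2 / dot a a by rewrite divr_gt0 // dot_gt0.
  by rewrite pairingE pmulr_lgt0 // pmulr_llt0 // mulf_eq0 (gt_eqF c0) orbF.
have HP1 : forall a, posgt0 pos l a = (a \in pos) && (0 < dot l a).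
  move=> a; rewrite /posgt0; case h: (a \in pos) => //=.
  by have [-> _ _] := sgn l a (root_neq0 H0 (proot _ h)).
have HP2 : forall a, poslt0 pos l a = (a \in pos) && (dot l a < 0).
  move=> a; rewrite /poslt0; case h: (a \in pos) => //=.
  by have [_ -> _] := sgn l a (root_neq0 H0 (proot _ h)).
have HP3 : forall a, poseq0 pos l a = (a \in pos) && (dot l a == 0).
  move=> a; rewrite /poseq0; case h: (a \in pos) => //=.
  by have [_ _ ->] := sgn l a (root_neq0 H0 (proot _ h)).
have inj : forall x y : 'rV[R]_n, x *m w0 = y *m w0 -> x = y.
  move=> x y e; apply/eqP; rewrite -subr_eq0; apply/eqP; apply: dot_eq0.
  rewrite -Hd mulmxBl e subrr dotE big1 // => i _; by rewrite mxE mul0r.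
have pre : forall a, a \in roots -> exists2 b, b \in roots & b *m w0 = a.
  move=> a ha.
  have [_ E] : (size [seq x *m w0 | x <- roots] = size roots) *
      ([seq x *m w0 | x <- roots] =i roots).
    apply: uniq_min_size.
    - by rewrite map_inj_uniq // => x y; exact: inj.
    - by move=> x /mapP[y hy ->]; exact: Hr.
    - by rewrite size_map.
  have : a \in [seq x *m w0 | x <- roots] by rewrite E.
  by case/mapP => b hb ->; exists b.
have Ldot : forall a, dot l (a *m w0) = dot lp a by move=> a; rewrite -Hlw0 Hd.
have Cl : forall b, b \in pos -> b *m w0 \in pos -> dot l (b *m w0) != 0.
  move=> b hb hy; apply/eqP => e.
  have hyr := proot _ hy.
  have Hw' := in_weyl_mulr Hw0 hyr.
  have Hl' : lp *m (w0 *m refl_mx (b *m w0)) = l.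
    by rewrite mulmxA Hlw0 reflE /pairing e mulr0 mul0r scale0r subr0.
  have := bruhat_len (Hmax _ Hw' Hl').
  by rewrite leqNgt (length_lt H0 Hrefl Hposm Hreg Hupos Hw0 hb hy).
have dom : forall a, a \in pos -> 0 <= dot lp a.
  move=> a ha; have := Hdom a ha; rewrite pairingE pmulr_lge0 //.
  by rewrite divr_gt0 // dot_gt0 // (root_neq0 H0 (proot _ ha)).
have posOf : forall b, b \in roots -> 0 < dot lp b -> b \in pos.
  move=> b hb lb; apply: contraTT lb => nb.
  rewrite (notpos H0 Hrefl Hposm Hreg hb) in nb.
  have := dom _ nb; rewrite dotNr oppr_ge0 => h; rewrite -leNgt //.
have HW : forall x, (x \in act_set w0 pos) =
    [|| posgt0 pos l x, poslt0 pos l (- x) | poseq0 pos l (- x)].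
  move=> x; rewrite HP1 HP2 HP3 dotNr oppr_lt0 oppr_eq0.
  apply/idP/idP.
    case/mapP => a ha ->; have ar := proot a ha; have xr := Hr a ar.
    have Da := dom a ha; rewrite Ldot in Da *.
    case hp: (a *m w0 \in pos) => /=.
      by rewrite lt_def Da andbT -Ldot Cl.
    rewrite -(notpos H0 Hrefl Hposm Hreg xr) hp /=.
    by move: Da; rewrite le_eqVlt eq_sym; case/orP => ->; rewrite ?orbT.
  case/or3P => /andP[hx lx].
  - have [b br eb] := pre x (proot _ hx).
    apply/mapP; exists b => //; apply: posOf => //; by rewrite -Ldot eb.
  - have xr : x \in roots by rewrite -[x]opprK; apply: root_neg => //; exact: proot.
    have [b br eb] := pre x xr.
    apply/mapP; exists b => //; apply: posOf => //; by rewrite -Ldot eb.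
  - have [b br eb] := pre (- x) (proot _ hx).
    have nb : b \notin pos.
      apply/negP => bp; have := Cl b bp; rewrite eb hx dotNr oppr_eq0 lx.
      by move/(_ isT).
    rewrite (notpos H0 Hrefl Hposm Hreg br) in nb.
    apply/mapP; exists (- b) => //; by rewrite mulNmx eb opprK.
have HWu : uniq (act_set w0 pos).
  by rewrite /act_set map_inj_uniq // => x y; exact: inj.
have HLD : forall x y, dot l (x + y) = dot l x + dot l y by move=> x y; rewrite dotDr.
have HLN : forall x, dot l (- x) = - dot l x by move=> x; rewrite dotNr.
have HFD : forall x y, dot f (x + y) = dot f x + dot f y by move=> x y; rewrite dotDr.
have HFN : forall x, dot f (- x) = - dot f x by move=> x; rewrite dotNr.
have HFpos : forall a, a \in pos -> 0 < dot f a by move=> a; rewrite Hposm => /andP[].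
split.
- move=> s Hs; exact: (part1 HLD HLN HFD HFN HFpos Hupos HP1 HP2 HP3 HW HWu Hs).
- move=> s1 s2 H1 H2 E; exact: (part2 HFN HFpos HP1 HP2 HP3 H1 H2 E).
- move=> t Ht; exact: (part3 HLD HFN HFpos Hupos HP1 HP2 HP3 HW HWu Ht).
Qed.
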